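(* Let $x=(x_k)_{k\in\mathbb{Z}}$ be a sequence with $x_k\in\{-1,0,1,2,\dots\}$ for all $k$, and let $T$ be its record graph. Let $i\in\mathbb{Z}$ satisfy $L_x(i)>-\infty$. Then: \begin{enumerate} \item the number of children of $i$ in $T$ is $d_1(i)=x_{i-1}+1$; \item if $d_1(i)=n>0$ and $i_n<i_{n-1}<\dots<i_1$ are the children of $i$, then for each $m$, $m=x_{i-1}+1-y(i_m,i)$; \item if $d_1(i)=n>0$ and $m\in\{1,\dots,n\}$, then an integer $i'<i$ is the $m$-th child $i_m$ of $i$ if and only if $i'$ is the largest integer in $\{L_x(i),\dots,i-1\}$ satisfying $y(i',i)=x_{i-1}+1-m$. \end{enumerate}
   Context: Write $y(j,k)=\sum_{l=j}^{k-1}x_l$ for $j<k$. The record map is $R_x(i)=\inf\{n>i: y(i,n)\ge0\}$ if this set is nonempty, and $R_x(i)=i$ otherwise; the record graph has vertex set $\mathbb{Z}$ and directed edges $i\to R_x(i)$ for $R_x(i)\ne i$; the children of $i$ are the $j\ne i$ with $R_x(j)=i$. Define $L_x(i)=\inf\{j<i: y(k,i)\ge0\text{ for all }j\le k<i\}\in\mathbb{Z}\cup\{-\infty\}$ if this set is nonempty, and $L_x(i)=i$ otherwise. *)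

(* Defs.v *)
From Stdlib Require Import ZArith List Sorted.
Open Scope Z_scope.

Fixpoint sumx (x : Z -> Z) (j : Z) (n : nat) : Z :=
  match n with
  | O => 0
  | S n' => sumx x j n' + x (j + Z.of_nat n')
  end.

(* y(j,k) = sum_{l=j}^{k-1} x_l  (only used for j < k; it is 0 when k <= j) *)
Definition y (x : Z -> Z) (j k : Z) : Z := sumx x j (Z.to_nat (k - j)).

Definition R_is (x : Z -> Z) (i n : Z) : Prop :=
  (i < n /\ 0 <= y x i n /\ forall m, i < m -> 0 <= y x i m -> n <= m)
  \/ ((~ exists m, i < m /\ 0 <= y x i m) /\ n = i).

Definition Lset (x : Z -> Z) (i j : Z) : Prop :=
  j < i /\ forall k, j <= k < i -> 0 <= y x k i.

(* L_is x i l  <->  L_x(i) = l, with l a (finite) integer *)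
Definition L_is (x : Z -> Z) (i l : Z) : Prop :=
  (Lset x i l /\ forall j, Lset x i j -> l <= j)
  \/ ((~ exists j, Lset x i j) /\ l = i).

Definition child (x : Z -> Z) (i j : Z) : Prop := j <> i /\ R_is x j i.

(* Main.v *)
Require Import Defs.
From Stdlib Require Import ZArith List Sorted Lia.
Open Scope Z_scope.

Lemma sumx_add x j a b :
  sumx x j (a + b) = sumx x j a + sumx x (j + Z.of_nat a) b.
Proof.
  induction b as [|b IH]; simpl.
  - rewrite Nat.add_0_r; lia.
  - rewrite Nat.add_succ_r; simpl. rewrite IH.
    replace (j + Z.of_nat (a + b)) with (j + Z.of_nat a + Z.of_nat b) by lia. lia.
Qed.

Lemma y_split x j k m : j <= k <= m -> y x j m = y x j k + y x k m.
Proof.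
  intros H. unfold y.
  replace (Z.to_nat (m - j)) with (Z.to_nat (k - j) + Z.to_nat (m - k))%nat by lia.
  rewrite sumx_add. f_equal. f_equal. lia.
Qed.

Lemma y_one x k : y x k (k + 1) = x k.
Proof.
  unfold y. replace (Z.to_nat (k + 1 - k)) with 1%nat by lia. simpl.
  f_equal; lia.
Qed.

Lemma y_step x k i : k < i -> y x k i = x k + y x (k + 1) i.
Proof.
  intros H. rewrite (y_split x k (k+1) i) by lia. rewrite y_one. lia.
Qed.

Fixpoint scan (F : Z -> Z) (j : Z) (n : nat) (cur : Z) : list Z :=
  match n with
  | O => nil
  | S n' => if F j <? cur then j :: scan F (j - 1) n' (F j)
            else scan F (j - 1) n' cur
  end.

Lemma scan_In F n : forall j cur a,
  In a (scan F j n cur) <->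
  (j - Z.of_nat n < a <= j /\ F a < cur /\ forall m, a < m <= j -> F a < F m).
Proof.
  induction n as [|n IH]; intros j cur a; simpl.
  - split; [tauto| lia].
  - destruct (Z.ltb_spec (F j) cur) as [Hl|Hl].
    + simpl. rewrite IH. split.
      * intros [<-|(H1&H2&H3)].
        -- split; [lia|split; [lia|intros; lia]].
        -- split; [lia|split; [lia|]]. intros m Hm.
           destruct (Z.eq_dec m j); [subst; lia|]. apply H3; lia.
      * intros (H1&H2&H3). destruct (Z.eq_dec a j); [left; lia|right].
        split; [lia|split]. apply H3; lia. intros; apply H3; lia.
    + rewrite IH. split.
      * intros (H1&H2&H3). split; [lia|split; [lia|]]. intros m Hm.
        destruct (Z.eq_dec m j); [subst; lia|]. apply H3; lia.
      * intros (H1&H2&H3). destruct (Z.eq_dec a j); [subst; lia|].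
        split; [lia|split; [lia|]]. intros; apply H3; lia.
Qed.

Lemma scan_sorted F n : forall j cur, StronglySorted Z.gt (scan F j n cur).
Proof.
  induction n as [|n IH]; intros j cur; simpl.
  - constructor.
  - destruct (F j <? cur); auto. constructor; auto.
    apply Forall_forall. intros a Ha. apply scan_In in Ha. lia.
Qed.

Lemma scan_count F n : forall j cur,
  0 <= cur -> cur - 1 <= F j ->
  (forall k, k <= j -> F k - 1 <= F (k - 1)) ->
  (forall k, j - Z.of_nat n < k <= j -> 0 <= F k) ->
  (cur <= 0 \/ exists k, j - Z.of_nat n < k <= j /\ F k = 0) ->
  length (scan F j n cur) = Z.to_nat cur /\
  forall k, (k < length (scan F j n cur))%nat ->
    F (nth k (scan F j n cur) 0) = cur - 1 - Z.of_nat k.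
Proof.
  induction n as [|n IH]; intros j cur H0 H1 Hst Hpos Hz; simpl.
  - destruct Hz as [Hz|(k&Hk&_)]; [|lia]. split; [lia|]. intros k Hk; simpl in Hk; lia.
  - destruct (Z.ltb_spec (F j) cur) as [Hl|Hl].
    + assert (0 <= F j) by (apply Hpos; lia).
      destruct (IH (j - 1) (F j)) as [IH1 IH2].
      * lia.
      * specialize (Hst j ltac:(lia)). lia.
      * intros k Hk; apply Hst; lia.
      * intros k Hk; apply Hpos; lia.
      * destruct Hz as [Hz|(k&Hk&Hk2)]; [lia|].
        destruct (Z.eq_dec k j); [subst; left; lia|right; exists k; split; [lia|auto]].
      * simpl. split; [rewrite IH1; lia|].
        intros [|k] Hk; simpl; [lia|]. simpl in Hk. rewrite IH2 by lia. lia.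
    + apply IH.
      * lia.
      * specialize (Hst j ltac:(lia)). lia.
      * intros k Hk; apply Hst; lia.
      * intros k Hk; apply Hpos; lia.
      * destruct Hz as [Hz|(k&Hk&Hk2)]; [left; lia|].
        destruct (Z.eq_dec k j); [subst; left; lia|right; exists k; split; [lia|auto]].
Qed.

Theorem lemma4p2 (x : Z -> Z) (hx : forall k, -1 <= x k) (i l : Z)
  (hL : L_is x i l) :
  exists s : list Z,
    StronglySorted Z.gt s /\
    (forall j, child x i j <-> In j s) /\
    (* 1. *)
    Z.of_nat (length s) = x (i - 1) + 1 /\
    (* 2. *)
    (forall m : nat, (1 <= m <= length s)%nat ->
       Z.of_nat m = x (i - 1) + 1 - y x (nth (m - 1) s 0) i) /\
    (* 3. *)
    (forall m : nat, (1 <= m <= length s)%nat ->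
       forall i', i' < i ->
         (i' = nth (m - 1) s 0 <->
          (l <= i' <= i - 1 /\ y x i' i = x (i - 1) + 1 - Z.of_nat m /\
           forall j, l <= j <= i - 1 -> y x j i = x (i - 1) + 1 - Z.of_nat m -> j <= i'))).
Proof.
  set (F := fun k => y x k i).
  assert (Hli : l <= i) by (destruct hL as [((?&_)&_)|(_&->)]; lia).
  assert (HLs : forall j, Lset x i j -> l <= j).
  { intros j Hj. destruct hL as [(_&H)|(H&_)]; [auto|]. exfalso; eauto. }
  assert (Hpos : forall k, l <= k < i -> 0 <= F k).
  { intros k Hk. destruct hL as [((_&H)&_)|(_&->)]; [apply H; lia|lia]. }
  assert (Hxi : x (i - 1) = y x (i - 1) i).
  { rewrite <- (y_one x (i - 1)). f_equal. lia. }
  assert (Hst : forall k, k <= i - 1 -> F k - 1 <= F (k - 1)).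
  { intros k Hk. unfold F. rewrite (y_step x (k-1) i) by lia.
    replace (k - 1 + 1) with k by lia. specialize (hx (k-1)). lia. }
  assert (Hz : x (i - 1) + 1 <= 0 \/
               exists k, i - 1 - Z.of_nat (Z.to_nat (i - l)) < k <= i - 1 /\ F k = 0).
  { destruct hL as [((Hl1&Hl2)&Hmin)|(Hn&->)].
    - right. exists l. split; [lia|].
      assert (Hn : ~ Lset x i (l - 1)) by (intros H; specialize (Hmin _ H); lia).
      assert (y x (l - 1) i < 0).
      { destruct (Z_lt_le_dec (y x (l-1) i) 0) as [?|Hc]; auto. exfalso; apply Hn.
        split; [lia|]. intros k Hk. destruct (Z.eq_dec k (l-1)); [subst; auto|].
        apply Hl2; lia. }
      assert (0 <= F l) by (apply Hpos; lia).
      unfold F in *. rewrite (y_step x (l-1) i) in H by lia.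
      replace (l - 1 + 1) with l in H by lia. specialize (hx (l-1)). lia.
    - left. destruct (Z_lt_le_dec (x (i-1)) 0) as [?|Hc]; [lia|]. exfalso; apply Hn.
      exists (i - 1). split; [lia|]. intros k Hk. replace k with (i-1) by lia. lia. }
  set (s := scan F (i - 1) (Z.to_nat (i - l)) (x (i - 1) + 1)).
  assert (Hmem : forall a, In a s <->
     (l <= a <= i - 1 /\ F a < x (i - 1) + 1 /\ forall m, a < m <= i - 1 -> F a < F m)).
  { intros a. unfold s. rewrite scan_In. split; intros (?&?&?); (split; [lia|auto]). }
  destruct (scan_count F (Z.to_nat (i - l)) (i - 1) (x (i - 1) + 1)) as [Hlen Hnth].
  { specialize (hx (i-1)); lia. }
  { unfold F; lia. }
  { exact Hst. }
  { intros k Hk; apply Hpos; lia. }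
  { exact Hz. }
  fold s in Hlen, Hnth.
  exists s. split; [apply scan_sorted|]. split; [|split; [|split]].
  - intros j. rewrite Hmem. split.
    + intros (Hji & [(Hj1&Hj2&Hj3)|(_&Hc)]); [|lia].
      assert (Hm : forall m, j < m < i -> F j < F m).
      { intros m Hm. unfold F. rewrite (y_split x j m i) by lia.
        assert (~ 0 <= y x j m) by (intros Hc; specialize (Hj3 m ltac:(lia) Hc); lia).
        lia. }
      assert (Lset x i j).
      { split; [lia|]. intros k Hk. destruct (Z.eq_dec k j); [subst; auto|].
        specialize (Hm k ltac:(lia)). unfold F in Hm; lia. }
      split; [split; [apply HLs; auto|lia]|split].
      * destruct (Z.eq_dec j (i-1)); [subst; unfold F; lia|].
        specialize (Hm (i-1) ltac:(lia)). unfold F in *; lia.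
      * intros m Hm'; apply Hm; lia.
    + intros (Hj1&Hj2&Hj3). split; [lia|left]. split; [lia|split].
      * apply (Hpos j); lia.
      * intros m Hm Hy. destruct (Z_lt_le_dec m i) as [Hc|]; [|lia]. exfalso.
        specialize (Hj3 m ltac:(lia)). unfold F in Hj3.
        rewrite (y_split x j m i) in Hj3 by lia. lia.
  - rewrite Hlen. specialize (hx (i-1)). lia.
  - intros m Hm. specialize (Hnth (m - 1)%nat ltac:(lia)). unfold F in Hnth. lia.
  - intros m Hm i' Hi'.
    assert (Hc := Hnth (m - 1)%nat ltac:(lia)).
    assert (Hin : In (nth (m - 1) s 0) s) by (apply nth_In; lia).
    apply Hmem in Hin. destruct Hin as (Hc1&Hc2&Hc3).
    set (c := nth (m - 1) s 0) in *. unfold F in *.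
    split.
    + intros ->. split; [lia|split; [lia|]]. intros j Hj Hyj.
      destruct (Z_le_gt_dec j c); auto. specialize (Hc3 j ltac:(lia)). lia.
    + intros (H1&H2&H3). assert (c <= i') by (apply H3; lia).
      destruct (Z.eq_dec c i'); auto. specialize (Hc3 i' ltac:(lia)). lia.
Qed.
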